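(* Let $d$ be a positive integer and $a(z)=\sum_{i\ge0}a_iz^i\in\mathbb{R}[[z]]$ a rational series satisfying (P1), (P2$_d$) and (P3$_d$). Then $$\lim_{z\to1}a(z)(1-z)^d=\lim_{k\to\infty}\frac{(d-1)!}{(d+k-1)!}\frac{\partial^ka}{\partial z^k}(0),$$ the limit on the right existing.
   Context: A rational series is the power series expansion at $z=0$ of a rational function that is regular at $0$; the left-hand limit is taken for the rational function. (P1): the rational function has poles only at roots of unity. (P2$_m$): $z=1$ is a pole of order exactly $m$. (P3$_m$): every pole other than $z=1$ has order less than $m$. *)

(* Defs.v *)
From HB Require Import structures.
From mathcomp Require Import all_boot all_order all_algebra.
From mathcomp Require Import all_classical all_reals all_analysis.
From mathcomp Require Import complex.
Set Implicit Arguments. Unset Strict Implicit. Unset Printing Implicit Defensive.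
Import Order.TTheory GRing.Theory Num.Theory.
Local Open Scope ring_scope.

(* A rational function over R is represented by a reduced fraction P/Q
   (coprimep P Q); "regular at 0" means Q.[0] != 0.  Its poles are the complex
   roots of Q (viewed in R[i]), and the order of a pole is the multiplicity of
   that root in Q. *)
Definition polyC_of (R : rcfType) (Q : {poly R}) : {poly R[i]} :=
  map_poly (real_complex R) Q.

(* a : nat -> R is the coefficient sequence of the power series expansion of
   P/Q at 0, i.e.  Q(z) * (sum_k a_k z^k) = P(z)  as formal power series. *)
Definition is_expansion (R : rcfType) (P Q : {poly R}) (a : nat -> R) : Prop :=
  forall k : nat, \sum_(i < k.+1) Q`_i * a (k - i)%N = P`_k.

(* Main.v *)
Require Import Defs.
From HB Require Import structures.
From mathcomp Require Import all_boot all_order all_algebra.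
From mathcomp Require Import all_classical all_reals all_analysis.
From mathcomp Require Import complex.
From mathcomp Require Import ring lra.
Import Order.TTheory GRing.Theory Num.Theory.
Import numFieldNormedType.Exports.
Local Open Scope classical_set_scope.
Local Open Scope ring_scope.

Set Implicit Arguments. Unset Strict Implicit. Unset Printing Implicit Defensive.

Lemma dvdp_mup (F : closedFieldType) (n : nat) (q p : {poly F}) :
  (size q <= n)%N -> q != 0 -> p != 0 ->
  (forall z, (mup z q <= mup z p)%N) -> q %| p.
Proof.
elim: n q p => [|n IH] q p.
  by rewrite leqn0 size_poly_eq0 => /eqP -> /eqP.
move=> sq q0 p0 hm.
have [/eqP/size_poly1P [c c0 ->]|] := eqVneq (size q) 1%N.
  by rewrite -alg_polyC dvdpZl // dvd1p.
case/closed_rootP => z /factor_theorem [q' Eq].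
have Xz0 : 'X - z%:P != 0 by rewrite polyXsubC_eq0.
have q'0 : q' != 0 by apply: contraNneq q0 => q'0; rewrite Eq q'0 mul0r.
have : (0 < mup z p)%N.
  apply: leq_trans (hm z); rewrite Eq mupM // -[_ - _]expr1 mup_XsubCX eqxx; exact: leq_addl.
rewrite -XsubC_dvd // => /divpK Ep.
set p' := p %/ _ in Ep.
have p'0 : p' != 0 by apply: contraNneq p0 => p'0; rewrite -Ep p'0 mul0r.
rewrite Eq -Ep dvdp_mul2r //.
apply: IH => //.
  rewrite -ltnS; apply: leq_trans sq.
  by rewrite Eq size_Mmonic ?monicXsubC // size_XsubC addn2.
move=> w; have := hm w; rewrite Eq -Ep !mupM // leq_add2r //.
Qed.


Lemma common_order (F : fieldType) (n : nat) (p : {poly F}) :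
  (size p <= n)%N -> p != 0 ->
  (forall z, root p z -> exists2 m : nat, (0 < m)%N & z ^+ m = 1) ->
  exists2 N : nat, (0 < N)%N & forall z, root p z -> z ^+ N = 1.
Proof.
elim: n p => [|n IH] p.
  by rewrite leqn0 size_poly_eq0 => /eqP -> /eqP.
move=> sp p0 hr.
have [[z rz]|nr] := pselect (exists z, root p z); last first.
  by exists 1%N => // z rz; case: nr; exists z.
have [m m0 zm] := hr z rz.
move/factor_theorem: rz => [p' Ep].
have p'0 : p' != 0 by apply: contraNneq p0 => p'0; rewrite Ep p'0 mul0r.
have sp' : (size p' <= n)%N.
  rewrite -ltnS; apply: leq_trans sp.
  by rewrite Ep size_Mmonic ?monicXsubC // size_XsubC addn2.
have hr' : forall w, root p' w -> exists2 m : nat, (0 < m)%N & w ^+ m = 1.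
  move=> w rw; apply: hr; by rewrite Ep rootM rw.
have [N' N'0 hN'] := IH p' sp' p'0 hr'.
exists (m * N')%N; first by rewrite muln_gt0 m0.
move=> w; rewrite Ep rootM => /orP [/hN' wN|]. 
  by rewrite mulnC exprM wN expr1n.
by rewrite root_XsubC => /eqP ->; rewrite exprM zm expr1n.
Qed.

Definition Dpoly (R : nzRingType) (N d : nat) : {poly R} :=
  (1 - 'X) * (1 - 'X^N) ^+ d.-1.

Lemma exists_D (R : rcfType) (d : nat) (Q : {poly R}) :
  (0 < d)%N -> Q != 0 ->
  (forall z : R[i], root (map_poly (real_complex R) Q) z ->
      exists2 n : nat, (0 < n)%N & z ^+ n = 1) ->
  (mup (1 : R[i]) (map_poly (real_complex R) Q) <= d)%N ->
  (forall z : R[i], root (map_poly (real_complex R) Q) z -> z != 1 ->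
      (mup z (map_poly (real_complex R) Q) < d)%N) ->
  exists2 N : nat, (0 < N)%N & Q %| Dpoly R N d.
Proof.
move=> d0 Q0 H1 H2 H3.
set Qc := map_poly _ Q in H1 H2 H3.
have Qc0 : Qc != 0 by rewrite map_poly_eq0.
have [N N0 hN] := common_order (leqnn _) Qc0 H1.
exists N => //.
rewrite -(dvdp_map (real_complex R)) -/Qc.
have -> : map_poly (real_complex R) (Dpoly R N d) = Dpoly R[i] N d.
  by rewrite /Dpoly rmorphM rmorphXn !rmorphB rmorph1 /= map_polyX map_polyXn.
have D0 : Dpoly R[i] N d != 0.
  rewrite /Dpoly mulf_neq0 ?expf_neq0 //.
    by apply/eqP => /(congr1 (horner^~ 0)); rewrite !hornerE subr0 => /eqP; rewrite oner_eq0.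
  apply/eqP => /(congr1 (horner^~ 0)); rewrite !hornerE expr0n eqn0Ngt N0 /= subr0 => /eqP.
  by rewrite oner_eq0.
apply: (dvdp_mup (leqnn _)) => // z.
have [rz|nrz] := boolP (root Qc z); last by rewrite mupNroot.
have zN := hN z rz.
have r1 : root (1 - 'X^N) z by rewrite /root !hornerE zN subrr.
have [z1e|z1] := eqVneq z 1.
  rewrite z1e mup_geq //.
  apply: dvdp_trans (dvdp_exp2l _ H2) _.
  rewrite /Dpoly -(prednK d0) exprS dvdp_mul //.
    by rewrite dvdp_XsubCl /root !hornerE subrr.
  by rewrite /= dvdp_exp2r // dvdp_XsubCl; move: r1; rewrite z1e.
rewrite mup_geq //; have := H3 z rz z1; rewrite -(prednK d0) ltnS => /(dvdp_exp2l ('X - z%:P)) h.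
apply: dvdp_trans h _; rewrite /Dpoly dvdp_mull // dvdp_exp2r // dvdp_XsubCl //.
Qed.


Section Conv.
Variable R : fieldType.
Implicit Types (u v w : nat -> R) (p q : {poly R}).

Definition cnv u v : nat -> R := fun k => \sum_(i < k.+1) u i * v (k - i)%N.
Definition dlt : nat -> R := fun k => (k == 0)%N%:R.
Definition pseq p : nat -> R := fun i => p`_i.
Definition cpw u (j : nat) : nat -> R := iter j (cnv u) dlt.

Lemma cnv_pseq p q : cnv (pseq p) (pseq q) = pseq (p * q).
Proof. by apply/funext => k; rewrite /cnv /pseq coefM. Qed.

Lemma cnvE u v n k : (k < n)%N ->
  cnv u v k = (\poly_(i < n) u i * \poly_(i < n) v i)`_k.
Proof.
move=> kn; rewrite coefM; apply: eq_bigr => i _.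
rewrite !coef_poly (leq_ltn_trans (leq_ord i) kn).
by rewrite (leq_ltn_trans (leq_subr _ _) kn).
Qed.

Lemma coefM_low (p F G : {poly R}) k : (forall i, (i <= k)%N -> F`_i = G`_i) ->
  (p * F)`_k = (p * G)`_k.
Proof.
move=> h; rewrite !coefM; apply: eq_bigr => i _; rewrite h //.
exact: leq_subr.
Qed.

Lemma coefMl_low (p F G : {poly R}) k : (forall i, (i <= k)%N -> F`_i = G`_i) ->
  (F * p)`_k = (G * p)`_k.
Proof. by move=> h; rewrite ![_ * p]mulrC; apply: coefM_low. Qed.

Lemma cnvA u v w : cnv u (cnv v w) = cnv (cnv u v) w.
Proof.
apply/funext => k.
rewrite (@cnvE _ _ k.+1) // (@cnvE _ w k.+1) //.
transitivity ((\poly_(i < k.+1) u i * (\poly_(i < k.+1) v i * \poly_(i < k.+1) w i))`_k).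
  apply: coefM_low => i ik; rewrite coef_poly ltnS ik.
  by rewrite (@cnvE _ _ k.+1).
rewrite mulrA; apply: coefMl_low => i ik; rewrite coef_poly ltnS ik.
by rewrite (@cnvE _ _ k.+1).
Qed.

Lemma cnv_dltl v : cnv dlt v = v.
Proof.
apply/funext => k; rewrite /cnv big_ord_recl /= /dlt mul1r subn0 big1 ?addr0 //.
by move=> i _; rewrite mul0r.
Qed.

Lemma cnv_dltr v : cnv v dlt = v.
Proof.
apply/funext => k; rewrite /cnv big_ord_recr /= /dlt subnn eqxx mulr1 big1 ?add0r //.
move=> i _; rewrite subn_eq0 leqNgt (ltn_ord i) /=; by rewrite mulr0.
Qed.

Lemma cnvDr u v w : cnv u (fun k => v k + w k) = fun k => cnv u v k + cnv u w k.
Proof. by apply/funext => k; rewrite /cnv -big_split; apply: eq_bigr => i _; rewrite mulrDr. Qed.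

Lemma cnvZr u v c : cnv u (fun k => c * v k) = fun k => c * cnv u v k.
Proof. by apply/funext => k; rewrite /cnv mulr_sumr; apply: eq_bigr => i _; rewrite mulrCA. Qed.

Lemma pseq1 : pseq 1 = dlt.
Proof. by apply/funext => k; rewrite /pseq coef1 /dlt; case: k. Qed.

Lemma cpw_pow p u j : cnv (pseq p) u = dlt -> cnv (pseq (p ^+ j)) (cpw u j) = dlt.
Proof.
move=> h; elim: j => [|j IH]; first by rewrite expr0 pseq1 cnv_dltl.
rewrite exprSr -cnv_pseq /cpw iterS -/(cpw u j).
by rewrite -cnvA (cnvA (pseq p)) h cnv_dltl IH.
Qed.

Definition is_exp (P Q : {poly R}) (a : nat -> R) := cnv (pseq Q) a = pseq P.

Lemma is_exp_mul (S P Q : {poly R}) a : is_exp P Q a -> is_exp (S * P) (S * Q) a.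
Proof. by rewrite /is_exp -!cnv_pseq -cnvA => ->. Qed.

Lemma is_exp_unique (P Q : {poly R}) (a b : nat -> R) : Q`_0 != 0 ->
  is_exp P Q a -> is_exp P Q b -> forall k, a k = b k.
Proof.
move=> Q0 ha hb k.
suff : forall i, (i <= k)%N -> a i = b i by apply.
elim: k => [|k IH] i.
  rewrite leqn0 => /eqP ->.
  have := congr1 (fun f => f 0%N) (etrans ha (esym hb)).
  rewrite /cnv !big_ord1 /= /pseq => /(mulfI Q0); done.
rewrite leq_eqVlt => /orP [/eqP ->|]; last by apply: IH.
have := congr1 (fun f => f k.+1) (etrans ha (esym hb)).
rewrite /cnv big_ord_recl [in X in _ = X -> _]big_ord_recl /= subn0.
have -> : \sum_(i < k.+1) pseq Q (bump 0 i) * a (k.+1 - bump 0 i)%N =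
          \sum_(i < k.+1) pseq Q (bump 0 i) * b (k.+1 - bump 0 i)%N.
  apply: eq_bigr => j _; congr (_ * _); apply: IH.
  by rewrite /bump /= add1n subSS leq_subr.
by move/addIr => /(mulfI Q0).
Qed.

Definition gam (N : nat) : nat -> R := fun k => (N %| k)%N%:R.

Lemma sum_pick (f : nat -> R) (n j : nat) :
  \sum_(i < n) (nat_of_ord i == j)%N%:R * f i = if (j < n)%N then f j else 0.
Proof.
rewrite -(big_ord1_eq (@GRing.add R) f j n) [RHS]big_mkcond; apply: eq_bigr => i _.
by rewrite mulr_natl mulrb.
Qed.

Lemma cnv_gam N : (0 < N)%N -> cnv (pseq (1 - 'X^N)) (gam N) = dlt.
Proof.
move=> N0; apply/funext => k; rewrite /cnv /pseq.
under eq_bigr => i _ do rewrite coefB coef1 coefXn mulrBl.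
rewrite sumrB (sum_pick (fun i => gam N (k - i))) (sum_pick (fun i => gam N (k - i))).
rewrite ltnS /gam /dlt subn0 /=.
case: k => [|k]; first by rewrite ltnNge N0 subr0 dvdn0.
rewrite /=; case: ltnP => Nk.
  by rewrite dvdn_subl ?dvdnn // subrr.
rewrite subr0; suff -> : (N %| k.+1)%N = false by [].
by apply/negbTE; apply: contraTN Nk => /(dvdn_leq (ltn0Sn k)) h; rewrite -ltnNge ltnS.
Qed.

End Conv.


Lemma hockey j k : (\sum_(i < k.+1) 'C((k - i + j).-1, k - i) = 'C(k + j, k))%N.
Proof.
elim: k => [|k IH]; first by rewrite big_ord1 !bin0.
rewrite big_ord_recl /= subn0.
under eq_bigr => i _ do rewrite /bump /= add1n subSS.
by rewrite IH addSn /= binS.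
Qed.

Section Bounds.
Variable R : realFieldType.

Lemma gam1 k : gam R 1 k = 1.
Proof. by rewrite /gam dvd1n. Qed.

Lemma cpw_one j k : cpw (gam R 1) j k = ('C((k + j).-1, k))%:R.
Proof.
elim: j k => [|j IH] k.
  rewrite /cpw /= /dlt addn0; case: k => [|k]; first by rewrite bin0.
  by rewrite bin_small.
rewrite /cpw iterS -/(cpw _ j) /cnv.
under eq_bigr => i _ do rewrite gam1 mul1r IH.
by rewrite -natr_sum hockey addnS.
Qed.

Lemma cpw_gam_bound N j k : 0 <= cpw (gam R N) j k <= cpw (gam R 1) j k.
Proof.
elim: j k => [|j IH] k; first by rewrite /cpw /= /dlt ler0n lexx.
rewrite /cpw iterS -!/(cpw _ j) /cnv; apply/andP; split.
  apply: sumr_ge0 => i _; apply: mulr_ge0; first by rewrite /gam ler0n.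
  by case/andP: (IH (k - i)%N).
apply: ler_sum => i _; apply: ler_pM; first by rewrite /gam ler0n.
- by case/andP: (IH (k - i)%N).
- by rewrite gam1 /gam lern1 leq_b1.
- by case/andP: (IH (k - i)%N).
Qed.

End Bounds.

Lemma beta_fact d k : (0 < d)%N ->
  ('C((k + d).-1, k) * ((d.-1)`! * k`!) = ((d + k).-1)`!)%N.
Proof.
move=> d0.
have h : ((k + d).-1 - k = d.-1)%N by rewrite -(prednK d0) addnS /= addKn.
have kle : (k <= (k + d).-1)%N by rewrite -(prednK d0) addnS /= leq_addr.
by rewrite [(d + k)%N]addnC -(bin_fact kle) h [((d.-1)`! * _)%N]mulnC.
Qed.

Lemma beta_ratio j k :
  ('C((k + j.+1).-1, k) * (k + j.+1) = j.+1 * 'C((k + j.+2).-1, k))%N.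
Proof.
by rewrite mulnC mul_bin_down addnS /= [in RHS]addnS /= -addnS addKn.
Qed.

Lemma beta_mono j : {homo (fun k => 'C((k + j.+1).-1, k)) : i k / (i <= k)%N >-> (i <= k)%N}.
Proof.
apply: homo_leq => //; first by move=> ? ? ?; apply: leq_trans.
move=> i /=; rewrite addnS /= binS; exact: leq_addl.
Qed.


Lemma cvg_bound (R : realType) (s : nat -> R) (c B : R) (K : nat) :
  (forall k, (K <= k)%N -> `|s k - c| <= B * k.+1%:R^-1) -> s @ \oo --> c.
Proof.
move=> hb.
have hh : (fun k => B * harmonic k) @ \oo --> (0 : R).
  rewrite -(mulr0 B); apply: cvgM; [exact: cvg_cst | exact: cvg_harmonic].
apply: (@squeeze_cvgr _ _ _ _ (fun k => c - B * harmonic k) (fun k => c + B * harmonic k)).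
- near=> k.
  have Kk : (K <= k)%N by near: k; exact: nbhs_infty_ge.
  by have := hb k Kk; rewrite distrC ler_distlC.
- rewrite -[X in _ --> X](subr0 c); apply: cvgB => //; exact: cvg_cst.
- rewrite -[X in _ --> X](addr0 c); apply: cvgD => //; exact: cvg_cst.
Unshelve. all: by end_near.
Qed.

Lemma left_lim (R : realType) (F : R -> R) (U V : {poly R}) :
  V.[1] != 0 ->
  (forall x : R, 0 < x -> x < 1 -> F x = U.[x] / V.[x]) ->
  F x @[x --> (1 : R)^'-] --> U.[1] / V.[1].
Proof.
move=> V1 hF.
have hc : (fun x => U.[x] / V.[x]) x @[x --> (1:R)] --> U.[1] / V.[1].
  apply: cvgM; first exact: continuous_horner.
  apply: cvgV => //; exact: continuous_horner.
apply: cvg_trans (cvg_at_left_filter hc).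
apply: near_eq_cvg; near=> x; rewrite hF //.
Unshelve. all: by end_near.
Qed.


Lemma sum_abs_le (R : realType) (V : {poly R}) n :
  \sum_(i < n) `|V`_i| <= \sum_(i < size V) `|V`_i|.
Proof.
case: (leqP n (size V)) => h.
  rewrite (big_ord_widen (size V) (fun i => `|V`_i|) h) big_mkcond /=.
  apply: ler_sum => i _; case: ifP => // _; exact: normr_ge0.
rewrite (big_ord_widen n (fun i => `|V`_i|) (ltnW h)) [X in _ <= X]big_mkcond /=.
apply: ler_sum => i _; case: ifP => // /negbT; rewrite -leqNgt => h'.
by rewrite nth_default // normr0.
Qed.

Lemma err_bound (R : realType) (N j : nat) (V : {poly R}) k :
  `|cnv (cpw (gam R N) j.+1) (pseq V) k| <=
    (\sum_(i < size V) `|V`_i|) * ('C((k + j.+1).-1, k))%:R.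
Proof.
rewrite /cnv; apply: le_trans (ler_norm_sum _ _ _) _.
apply: (@le_trans _ _ (\sum_(i < k.+1) ('C((k + j.+1).-1, k))%:R * `|V`_(k - i)|)).
  apply: ler_sum => i _; rewrite normrM ler_wpM2r //.
  have /andP [g0 g1] := cpw_gam_bound R N j.+1 i.
  rewrite ger0_norm //; apply: le_trans g1 _; rewrite cpw_one ler_nat.
  exact: (beta_mono j (leq_ord i : (i <= k)%N)).
rewrite -mulr_sumr mulrC ler_wpM2r //.
rewrite (reindex_inj rev_ord_inj) /=.
under eq_bigr => i _ do rewrite subSS subKn ?leq_ord //.
exact: sum_abs_le.
Qed.

Lemma seq_part (R : realType) (d N : nat) (V : {poly R}) (a : nat -> R) (c : R) :
  (0 < d)%N ->
  (forall k, a k = c * cpw (gam R 1) d k + cnv (cpw (gam R N) d.-1) (pseq V) k) ->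
  (fun k => (d.-1)`!%:R / ((d + k).-1)`!%:R * (k`!%:R * a k)) @ \oo --> c.
Proof.
move=> d0 ha.
set e := cnv _ _ in ha.
have hs : forall k, (d.-1)`!%:R / ((d + k).-1)`!%:R * (k`!%:R * a k) - c
    = e k / ('C((k + d).-1, k))%:R.
  move=> k.
  have C0 : ('C((k + d).-1, k))%:R != 0 :> R.
    by rewrite pnatr_eq0 -lt0n bin_gt0 -(prednK d0) addnS /= leq_addr.
  have F0 : ((d.-1)`!)%:R != 0 :> R by rewrite pnatr_eq0 -lt0n fact_gt0.
  have F1 : (k`!)%:R != 0 :> R by rewrite pnatr_eq0 -lt0n fact_gt0.
  rewrite ha cpw_one -(beta_fact k d0) !natrM.
  field.
  by rewrite C0 F0 F1.
rewrite {}/e in ha hs.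
case: d d0 ha hs => [//|[|j]] _ ha hs.
  apply: (@cvg_bound _ _ c 0 (size V)) => k hk.
  rewrite hs /cpw /= cnv_dltl /pseq nth_default // mul0r normr0 mul0r //.
apply: (@cvg_bound _ _ c ((\sum_(i < size V) `|V`_i|) * j.+1%:R) 0) => k _.
rewrite hs.
have Cp : (0 : R) < ('C((k + j.+2).-1, k))%:R.
  by rewrite ltr0n bin_gt0 addnS /= leq_addr.
rewrite normrM normfV (gtr0_norm Cp) ler_pdivrMr //.
apply: le_trans (err_bound N j V k) _.
rewrite -!mulrA ler_wpM2l //; first by apply: sumr_ge0 => i _; exact: normr_ge0.
rewrite mulrA mulrAC ler_pdivlMr ?ltr0n // -!natrM ler_nat.
by rewrite -beta_ratio leq_mul2l addnS ltnS leq_addr orbT.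
Qed.

Lemma is_exp_scale {R : fieldType} {P Q : {poly R}} {a} c :
  is_exp P Q a -> is_exp (c *: P) Q (fun k => c * a k).
Proof.
rewrite /is_exp cnvZr => ->; apply/funext => k; by rewrite /pseq coefZ.
Qed.

Lemma is_exp_add {R : fieldType} {P1 P2 Q : {poly R}} {a1 a2} :
  is_exp P1 Q a1 -> is_exp P2 Q a2 -> is_exp (P1 + P2) Q (fun k => a1 k + a2 k).
Proof.
rewrite /is_exp cnvDr => -> ->; apply/funext => k; by rewrite /pseq coefD.
Qed.

Unset Implicit Arguments. Set Strict Implicit. Set Printing Implicit Defensive.

Theorem lemma4p3 (R : realType) (d : nat) (P Q : {poly R}) (a : nat -> R) :
  (0 < d)%N ->
  coprimep P Q -> Q.[0] != 0 -> is_expansion P Q a ->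
  (* (P1): poles only at roots of unity *)
  (forall z : R[i], root (polyC_of Q) z -> exists2 n : nat, (0 < n)%N & z ^+ n = 1) ->
  (* (P2_d): z = 1 is a pole of order exactly d *)
  mup (1 : R[i]) (polyC_of Q) = d ->
  (* (P3_d): every other pole has order < d *)
  (forall z : R[i], root (polyC_of Q) z -> z != 1 -> (mup z (polyC_of Q) < d)%N) ->
  exists L : R,
    (P.[x] / Q.[x] * (1 - x) ^+ d @[x --> (1 : R)^'-] --> L) /\
    ((d.-1)`!%:R / ((d + k).-1)`!%:R * (k`!%:R * a k) @[k --> \oo] --> L).
Proof.
move=> d0 _ Q0' hexp H1 H2 H3.
have Q0 : Q != 0 by apply: contraNneq Q0' => ->; rewrite horner0.
have [N N0 QD] := exists_D d0 Q0 H1 (eq_leq H2) H3.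
set m := d.-1.
set D := Dpoly R N d.
set S := D %/ Q.
have hSQ : S * Q = D := divpK QD.
set U := S * P.
have hU : is_exp U D a.
  rewrite -hSQ; apply: is_exp_mul; apply/funext => k; exact: hexp k.
set T : {poly R} := \sum_(i < N) 'X^i.
have hT : 1 - 'X^N = (1 - 'X) * T.
  have := subrXX 1 ('X : {poly R}) N; rewrite expr1n => ->; congr (_ * _).
  by apply: eq_bigr => i _; rewrite expr1n mul1r.
have hD : D = T ^+ m * (1 - 'X) ^+ d.
  by rewrite /D /Dpoly hT exprMn mulrA -exprS prednK // mulrC.
have T1 : T.[1] = N%:R.
  rewrite /T horner_sum; under eq_bigr => i _ do rewrite hornerXn expr1n.
  by rewrite sumr_const card_ord.
have N0R : (N%:R : R) != 0 by rewrite pnatr_eq0 -lt0n.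
set c := U.[1] / (N%:R ^+ m).
have rt : root (U - c *: T ^+ m) 1.
  by rewrite /root hornerD hornerN hornerZ horner_exp T1 /c divfK ?expf_neq0 // subrr.
have [W EW] := factor_theorem _ _ rt.
set V := - W.
have hUdec : U = c *: T ^+ m + (1 - 'X) * V.
  by rewrite /V mulrN -mulNr opprB mulrC -EW addrC subrK.
set beta := cpw (gam R 1) d.
have hb : is_exp 1 ((1 - 'X) ^+ d) beta.
  rewrite /is_exp (pseq1 R); apply: cpw_pow.
  by rewrite -[X in 1 - X]expr1; apply: cnv_gam.
have hb' : is_exp (c *: T ^+ m) D (fun k => c * beta k).
  apply: is_exp_scale; rewrite hD -[T ^+ m]mulr1 -mulrA mul1r.
  exact: is_exp_mul.
set e := cnv (cpw (gam R N) m) (pseq V).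
have he : is_exp V ((1 - 'X^N) ^+ m) e.
  by rewrite /is_exp /e cnvA cpw_pow ?cnv_gam // cnv_dltl.
have he' : is_exp ((1 - 'X) * V) D e by apply: is_exp_mul.
have hsum := is_exp_add hb' he'.
rewrite -hUdec in hsum.
have D00 : D`_0 != 0.
  rewrite -horner_coef0 /D /Dpoly !hornerE expr0n eqn0Ngt N0 /= subr0 expr1n mulr1.
  by rewrite oner_eq0.
have ha := is_exp_unique D00 hU hsum.
exists c; split.
  have Tm1 : (T ^+ m).[1] != 0 by rewrite horner_exp T1 expf_neq0.
  have -> : c = U.[1] / (T ^+ m).[1] by rewrite horner_exp T1.
  apply: (left_lim Tm1) => x x0 x1.
  have Tx : 0 < T.[x].
    rewrite /T horner_sum -(prednK N0) big_ord_recl hornerXn expr0.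
    apply: (lt_le_trans ltr01); rewrite lerDl; apply: sumr_ge0 => i _.
    by rewrite hornerXn exprn_ge0 // ltW.
  have hx : Q.[x] * S.[x] = T.[x] ^+ m * (1 - x) ^+ d.
    have := congr1 (horner^~ x) hSQ; rewrite hD /= !hornerM !horner_exp.
    rewrite mulrC => ->; congr (_ * _ ^+ _); by rewrite !hornerE.
  have x1' : 1 - x != 0 by rewrite subr_eq0 eq_sym lt_eqF.
  have RHS0 : T.[x] ^+ m * (1 - x) ^+ d != 0.
    by rewrite mulf_neq0 ?expf_neq0 // gt_eqF.
  have Qx0 : Q.[x] != 0.
    by apply: contraNneq RHS0 => Q0x; rewrite -hx Q0x mul0r.
  have Sx0 : S.[x] != 0.
    by apply: contraNneq RHS0 => S0x; rewrite -hx S0x mulr0.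
  have Tm : T.[x] ^+ m = Q.[x] * S.[x] / (1 - x) ^+ d.
    by rewrite hx mulfK // expf_neq0.
  rewrite /U hornerM horner_exp Tm.
  field.
  by rewrite Qx0 Sx0 expf_neq0.
apply: (seq_part (N := N) (V := V) d0) => k.
by rewrite ha.
Qed.
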